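(* Let $\alpha=[0;a_1,a_2,\ldots]\in\mathbf{Bad}$ and let $(p_n/q_n)_{n\ge1}$ be the sequence of its convergents. Assume that there exist a positive rational number $x$ and two sequences of finite words $(U_k)_{k\ge1}$ and $(V_k)_{k\ge1}$ over the positive integers such that, for every $k\ge1$, the sequence of partial quotients $a_1a_2\ldots$ of $\alpha$ begins with the word $V_kU_k\overline{U}_k$, and $|U_{k+1}|>|U_k|\ge x|V_k|$. Set $M=\limsup_{\ell\to+\infty}q_\ell^{1/\ell}$ and $m=\liminf_{\ell\to+\infty}q_\ell^{1/\ell}$. If $$x>\frac32\cdot\frac{\log M}{\log m}-\frac12,$$ then for every real number $\beta$ equal to $\alpha$ up to a rational homography one has $\inf_{q\ge1}q\cdot\Vert q\alpha\Vert\cdot\Vert q\beta\Vert=0$.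
   Context: For a real number $y$, $\Vert y\Vert$ denotes the distance from $y$ to the nearest integer. $\mathbf{Bad}=\{\alpha\in\mathbb{R} : \inf_{q\ge1} q\Vert q\alpha\Vert>0\}$ (equivalently, real numbers with bounded partial quotients). A finite word $W=w_1\ldots w_r$ over the positive integers is identified with the sequence of partial quotients $w_1,\ldots,w_r$; $|W|$ denotes its length and $\overline{W}=w_r\ldots w_1$ its mirror image. A real number $\beta$ is equal to $\alpha$ up to a rational homography if $\beta=(a\alpha+b)/(c\alpha+d)$ for some integers $a,b,c,d$ with $ad-bc\neq0$. *)

(* Defs.v *)
From Stdlib Require Import Reals Lra Lia List.
From Coquelicot Require Import Coquelicot.
Open Scope R_scope.

Definition dnint (y : R) : R := Rmin (frac_part y) (1 - frac_part y).

Definition Bad (alpha : R) : Prop :=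
  exists c : R, 0 < c /\ forall q : nat, (1 <= q)%nat ->
    c <= INR q * dnint (INR q * alpha).

(* Partial quotients are given by a : nat -> nat with a i = a_{i+1}
   (so the sequence a_1 a_2 ... is a 0, a 1, ...).
   cf_pq a n = (p_n, q_n): p_0 = 0, q_0 = 1, p_1 = 1, q_1 = a_1,
   p_{n+2} = a_{n+2} p_{n+1} + p_n, and likewise for q. *)
Fixpoint cf_pq2 (a : nat -> nat) (n : nat) : (nat * nat) * (nat * nat) :=
  match n with
  | O => ((0%nat, 1%nat), (1%nat, a O))
  | S n' =>
      let '((p0, q0), (p1, q1)) := cf_pq2 a n' in
      ((p1, q1), (a (S n') * p1 + p0, a (S n') * q1 + q0)%nat)
  end.

Definition cf_p (a : nat -> nat) (n : nat) : nat := fst (fst (cf_pq2 a n)).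
Definition cf_q (a : nat -> nat) (n : nat) : nat := snd (fst (cf_pq2 a n)).

Definition is_cf (alpha : R) (a : nat -> nat) : Prop :=
  (forall i, (1 <= a i)%nat) /\
  is_lim_seq (fun n => INR (cf_p a n) / INR (cf_q a n)) alpha.

Definition begins_with (a : nat -> nat) (W : list nat) : Prop :=
  forall i, (i < List.length W)%nat -> a i = List.nth i W 0%nat.

Definition pos_word (W : list nat) : Prop := List.Forall (fun w => (1 <= w)%nat) W.

(* l |-> q_l^{1/l}, reindexed from l = 1 (value at n is q_{n+1}^{1/(n+1)}). *)
Definition qroot (a : nat -> nat) (n : nat) : R :=
  Rpower (INR (cf_q a (S n))) (/ INR (S n)).

(* Main.v *)
Require Import Defs.
From Stdlib Require Import Reals Lra Lia List ZArith.
From Coquelicot Require Import Coquelicot.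
Open Scope R_scope.

Lemma cf_q_SS a n : cf_q a (S (S n)) = (a (S n) * cf_q a (S n) + cf_q a n)%nat.
Proof. unfold cf_q; simpl. destruct (cf_pq2 a n) as [[p0 q0] [p1 q1]]; reflexivity. Qed.
Lemma cf_p_SS a n : cf_p a (S (S n)) = (a (S n) * cf_p a (S n) + cf_p a n)%nat.
Proof. unfold cf_p; simpl. destruct (cf_pq2 a n) as [[p0 q0] [p1 q1]]; reflexivity. Qed.
Lemma cf_q_0 a : cf_q a 0 = 1%nat. Proof. reflexivity. Qed.
Lemma cf_q_1 a : cf_q a 1 = a 0%nat. Proof. reflexivity. Qed.
Lemma cf_p_0 a : cf_p a 0 = 0%nat. Proof. reflexivity. Qed.
Lemma cf_p_1 a : cf_p a 1 = 1%nat. Proof. reflexivity. Qed.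

Lemma q_basic a (Ha : forall i, (1 <= a i)%nat) n :
  (1 <= cf_q a n /\ cf_q a n <= cf_q a (S n))%nat.
Proof.
  induction n as [|n IH].
  - rewrite cf_q_0, cf_q_1. specialize (Ha 0%nat). lia.
  - destruct IH as [H1 H2]. split; [lia|]. rewrite cf_q_SS.
    specialize (Ha (S n)). nia.
Qed.

Lemma q_mono a (Ha : forall i, (1 <= a i)%nat) i j :
  (i <= j)%nat -> (cf_q a i <= cf_q a j)%nat.
Proof.
  induction 1; [lia|]. pose proof (q_basic a Ha m). lia.
Qed.

Lemma p_le_q a (Ha : forall i, (1 <= a i)%nat) n :
  (cf_p a n <= cf_q a n /\ cf_p a (S n) <= cf_q a (S n))%nat.
Proof.
  induction n as [|n IH].
  - rewrite cf_q_0, cf_q_1, cf_p_0, cf_p_1. specialize (Ha 0%nat). lia.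
  - destruct IH as [H1 H2]. split; [lia|]. rewrite cf_q_SS, cf_p_SS. nia.
Qed.

Lemma q_double a (Ha : forall i, (1 <= a i)%nat) n :
  (2 * cf_q a n <= cf_q a (S (S n)))%nat.
Proof.
  rewrite cf_q_SS. pose proof (q_basic a Ha n). specialize (Ha (S n)). nia.
Qed.

Definition Qr a n := INR (cf_q a n).
Definition Pr a n := INR (cf_p a n).

Lemma Qr_SS a n : Qr a (S (S n)) = INR (a (S n)) * Qr a (S n) + Qr a n.
Proof. unfold Qr. rewrite cf_q_SS, plus_INR, mult_INR. reflexivity. Qed.
Lemma Pr_SS a n : Pr a (S (S n)) = INR (a (S n)) * Pr a (S n) + Pr a n.
Proof. unfold Pr. rewrite cf_p_SS, plus_INR, mult_INR. reflexivity. Qed.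

Lemma det_pq a n : Pr a (S n) * Qr a n - Pr a n * Qr a (S n) = (-1) ^ n.
Proof.
  induction n as [|n IH].
  - unfold Pr, Qr. rewrite cf_q_0, cf_q_1, cf_p_0, cf_p_1. simpl. ring.
  - rewrite Qr_SS, Pr_SS. simpl. rewrite <- IH. ring.
Qed.

Lemma Qr_ge1 a (Ha : forall i, (1 <= a i)%nat) n : 1 <= Qr a n.
Proof. unfold Qr. apply (le_INR 1). apply q_basic; auto. Qed.

Lemma Qr_mono a (Ha : forall i, (1 <= a i)%nat) i j : (i <= j)%nat -> Qr a i <= Qr a j.
Proof. intros. unfold Qr. apply le_INR. apply q_mono; auto. Qed.

Lemma Pr_le_Qr a (Ha : forall i, (1 <= a i)%nat) n : Pr a n <= Qr a n.
Proof. unfold Qr, Pr. apply le_INR. apply p_le_q; auto. Qed.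

Lemma Pr_ge0 a n : 0 <= Pr a n.
Proof. apply pos_INR. Qed.

Lemma cf_err a alpha (Hcf : is_cf alpha a) n :
  Rabs (Qr a n * alpha - Pr a n) <= / Qr a (S n).
Proof.
  destruct Hcf as [Ha Hlim].
  set (c := fun j => Pr a j / Qr a j).
  set (lo := Rmin (c n) (c (S n))). set (hi := Rmax (c n) (c (S n))).
  assert (Hq : forall j, 0 < Qr a j) by (intro j; pose proof (Qr_ge1 a Ha j); lra).
  assert (Hinv : forall j, lo * Qr a (j + n) <= Pr a (j + n) <= hi * Qr a (j + n)
                 /\ lo * Qr a (S (j + n)) <= Pr a (S (j + n)) <= hi * Qr a (S (j + n))).
  { assert (Hc : forall j, lo <= c j <= hi -> lo * Qr a j <= Pr a j <= hi * Qr a j).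
    { intros j [H1 H2]. unfold c in *. pose proof (Hq j).
      split.
      - apply (Rmult_le_reg_r (/ Qr a j)). apply Rinv_0_lt_compat; auto.
        rewrite Rmult_assoc, Rinv_r by lra. lra.
      - apply (Rmult_le_reg_r (/ Qr a j)). apply Rinv_0_lt_compat; auto.
        rewrite (Rmult_assoc hi), Rinv_r by lra. lra. }
    induction j as [|j IH].
    - simpl. split; apply Hc; unfold lo, hi;
        split; try apply Rmin_l; try apply Rmin_r; try apply Rmax_l; try apply Rmax_r.
    - destruct IH as [IH1 IH2]. split; [simpl; exact IH2|].
      simpl. rewrite Qr_SS, Pr_SS.
      pose proof (pos_INR (a (S (j + n)))).
      simpl in IH2. destruct IH1 as [I1 I2], IH2 as [I3 I4].
      set (A := INR (a (S (j + n)))) in *.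
      assert (0 <= A * (Pr a (S (j + n)) - lo * Qr a (S (j + n)))) by (apply Rmult_le_pos; lra).
      assert (0 <= A * (hi * Qr a (S (j + n)) - Pr a (S (j + n)))) by (apply Rmult_le_pos; lra).
      split; nra. }
  assert (Hlo : lo <= alpha).
  { assert (Hl := Hlim). apply (is_lim_seq_incr_n _ n) in Hl.
    assert (Rbar_le lo alpha); [|exact H].
    eapply is_lim_seq_le; [|apply is_lim_seq_const| exact Hl].
    intro j. simpl. destruct (Hinv j) as [[H1 H2] _]. unfold c.
    pose proof (Hq (j+n)%nat).
    change (INR (cf_p a (j+n))) with (Pr a (j+n)); change (INR (cf_q a (j+n))) with (Qr a (j+n)).
    apply (Rmult_le_reg_r (Qr a (j+n))); auto. unfold Rdiv.
    rewrite Rmult_assoc, Rinv_l by lra. lra. }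
  assert (Hhi : alpha <= hi).
  { assert (Hl := Hlim). apply (is_lim_seq_incr_n _ n) in Hl.
    assert (Rbar_le alpha hi); [|exact H].
    eapply is_lim_seq_le; [| exact Hl|apply is_lim_seq_const].
    intro j. simpl. destruct (Hinv j) as [[H1 H2] _]. unfold c.
    pose proof (Hq (j+n)%nat).
    change (INR (cf_p a (j+n))) with (Pr a (j+n)); change (INR (cf_q a (j+n))) with (Qr a (j+n)).
    apply (Rmult_le_reg_r (Qr a (j+n))); auto. unfold Rdiv.
    rewrite Rmult_assoc, Rinv_l by lra. lra. }
  assert (Hcn : lo <= c n <= hi) by (unfold lo, hi; split; [apply Rmin_l|apply Rmax_l]).
  assert (Hd : hi - lo = Rabs (c (S n) - c n)).
  { unfold hi, lo, Rmax, Rmin. destruct (Rle_dec (c n) (c (S n))).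
    - rewrite Rabs_right; lra.
    - rewrite Rabs_left; lra. }
  assert (Hd2 : Rabs (c (S n) - c n) = / (Qr a n * Qr a (S n))).
  { unfold c. pose proof (Hq n). pose proof (Hq (S n)).
    replace (Pr a (S n) / Qr a (S n) - Pr a n / Qr a n)
      with ((Pr a (S n) * Qr a n - Pr a n * Qr a (S n)) / (Qr a n * Qr a (S n)))
      by (field; lra).
    rewrite det_pq. unfold Rdiv. rewrite Rabs_mult, Rabs_Rinv by nra.
    rewrite pow_1_abs, Rabs_right by nra. lra. }
  assert (Habs : Rabs (alpha - c n) <= / (Qr a n * Qr a (S n))).
  { rewrite <- Hd2, <- Hd. apply Rabs_le. lra. }
  replace (Qr a n * alpha - Pr a n) with (Qr a n * (alpha - c n))
    by (unfold c; field; pose proof (Hq n); lra).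
  rewrite Rabs_mult, Rabs_right by (pose proof (Hq n); lra).
  pose proof (Hq n). pose proof (Hq (S n)).
  apply (Rmult_le_compat_l (Qr a n)) in Habs; [|lra].
  rewrite Rinv_mult in Habs. 
  replace (Qr a n * (/ Qr a n * / Qr a (S n))) with (/ Qr a (S n)) in Habs by (field; lra).
  exact Habs.
Qed.

Record mat := Mk { m11 : R; m12 : R; m21 : R; m22 : R }.
Definition mmul (A B : mat) : mat :=
  Mk (m11 A * m11 B + m12 A * m21 B) (m11 A * m12 B + m12 A * m22 B)
     (m21 A * m11 B + m22 A * m21 B) (m21 A * m12 B + m22 A * m22 B).
Definition mtr (A : mat) : mat := Mk (m11 A) (m21 A) (m12 A) (m22 A).
Definition mI : mat := Mk 1 0 0 1.
Definition mA (x : nat) : mat := Mk (INR x) 1 1 0.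
Fixpoint Mw (w : list nat) : mat :=
  match w with nil => mI | x :: w' => mmul (mA x) (Mw w') end.

Lemma mmul_assoc A B C : mmul (mmul A B) C = mmul A (mmul B C).
Proof. destruct A, B, C; unfold mmul; simpl; f_equal; ring. Qed.
Lemma mmul_I_l A : mmul mI A = A.
Proof. destruct A; unfold mmul, mI; simpl; f_equal; ring. Qed.
Lemma mmul_I_r A : mmul A mI = A.
Proof. destruct A; unfold mmul, mI; simpl; f_equal; ring. Qed.

Lemma Mw_app w1 w2 : Mw (w1 ++ w2) = mmul (Mw w1) (Mw w2).
Proof.
  induction w1 as [|x w IH]; simpl.
  - now rewrite mmul_I_l.
  - now rewrite IH, mmul_assoc.
Qed.

Lemma Mw_rev w : Mw (rev w) = mtr (Mw w).
Proof.
  induction w as [|x w IH]; simpl.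
  - unfold mtr, mI; simpl; reflexivity.
  - rewrite Mw_app, IH. simpl. rewrite mmul_I_r.
    destruct (Mw w); unfold mtr, mmul, mA; simpl; f_equal; ring.
Qed.

Definition pre (a : nat -> nat) n := map a (seq 0 n).

Lemma pre_S a n : pre a (S n) = pre a n ++ a n :: nil.
Proof. unfold pre. rewrite seq_S, map_app. reflexivity. Qed.

Lemma begins_pre a w : begins_with a w -> w = pre a (length w).
Proof.
  intro H. apply nth_ext with (d := 0%nat) (d' := 0%nat).
  - unfold pre. now rewrite length_map, length_seq.
  - intros i Hi. rewrite <- H by exact Hi. unfold pre.
    rewrite nth_indep with (d' := a 0%nat) by (rewrite length_map, length_seq; lia).
    rewrite map_nth, seq_nth by lia. reflexivity.
Qed.

Lemma begins_app a w1 w2 : begins_with a (w1 ++ w2) -> begins_with a w1.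
Proof.
  intros H i Hi. rewrite H by (rewrite length_app; lia). now rewrite app_nth1.
Qed.

Definition qm a n := match n with O => 0%nat | S k => cf_q a k end.
Definition pm a n := match n with O => 1%nat | S k => cf_p a k end.
Definition Mseq a n := Mk (INR (cf_q a n)) (INR (qm a n)) (INR (cf_p a n)) (INR (pm a n)).

Lemma Mw_pre a n : Mw (pre a n) = Mseq a n.
Proof.
  induction n as [|n IH].
  - unfold Mseq, mI; simpl. reflexivity.
  - rewrite pre_S, Mw_app, IH. simpl. rewrite mmul_I_r.
    destruct n as [|n].
    + unfold Mseq, mmul, mA; simpl. rewrite cf_q_1. unfold cf_p, cf_q; simpl. f_equal; ring.
    + unfold Mseq, mmul, mA; simpl. rewrite cf_q_SS, cf_p_SS, !plus_INR, !mult_INR.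
      f_equal; ring.
Qed.

Lemma sym_key a V U :
  begins_with a (V ++ U ++ rev U) ->
  let n := length (V ++ U ++ rev U) in let r := length V in
  m11 (Mseq a n) * m21 (Mseq a r) + m12 (Mseq a n) * m22 (Mseq a r) =
  m21 (Mseq a n) * m11 (Mseq a r) + m22 (Mseq a n) * m12 (Mseq a r).
Proof.
  intros H n r.
  assert (HV := begins_app _ _ _ H).
  apply begins_pre in H. apply begins_pre in HV.
  unfold n, r. rewrite <- !Mw_pre, <- H, <- HV.
  rewrite !Mw_app, Mw_rev.
  destruct (Mw V), (Mw U). unfold mmul, mtr; simpl. ring.
Qed.

Lemma dnint_ge0 y : 0 <= dnint y.
Proof. unfold dnint. pose proof (base_fp y). unfold Rmin; destruct Rle_dec; lra. Qed.

Lemma dnint_le y K : dnint y <= Rabs (y - IZR K).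
Proof.
  unfold dnint. pose proof (base_fp y) as [H1 H2].
  assert (Hy : y - IZR K = frac_part y + IZR (Int_part y - K)).
  { unfold frac_part. rewrite minus_IZR. ring. }
  rewrite Hy. destruct (Z_lt_le_dec (Int_part y - K) 0) as [Hl|Hl].
  - assert (IZR (Int_part y - K) <= -1) by (apply IZR_le; lia).
    rewrite Rabs_left by lra. pose proof (Rmin_r (frac_part y) (1 - frac_part y)). lra.
  - apply IZR_le in Hl. rewrite Rabs_right by lra.
    pose proof (Rmin_l (frac_part y) (1 - frac_part y)). lra.
Qed.

Lemma dnint_abs N y K : dnint (IZR (Z.abs N) * y) <= Rabs (IZR N * y - IZR K).
Proof.
  destruct (Z_lt_le_dec N 0).
  - rewrite Z.abs_neq by lia. rewrite opp_IZR.
    eapply Rle_trans. apply (dnint_le _ (- K)).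
    rewrite opp_IZR. replace (- IZR N * y - - IZR K) with (- (IZR N * y - IZR K)) by ring.
    rewrite Rabs_Ropp. lra.
  - rewrite Z.abs_eq by lia. apply dnint_le.
Qed.

Lemma dnint_int z : dnint (IZR z) = 0.
Proof.
  assert (Int_part (IZR z) = z).
  { pose proof (base_Int_part (IZR z)) as [H1 H2].
    apply le_IZR in H1. rewrite <- minus_IZR in H2. apply Rgt_lt in H2.
    assert (-1 < IZR (Int_part (IZR z) - z)) by lra. apply lt_IZR in H. lia. }
  unfold dnint, frac_part. rewrite H. unfold Rmin. destruct Rle_dec; lra.
Qed.

Lemma bad_irr alpha (Hbad : Bad alpha) c3 c4 :
  (c3 <> 0 \/ c4 <> 0)%Z -> IZR c3 * alpha + IZR c4 <> 0.
Proof.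
  intros Hc Heq. destruct Hbad as [c [Hc0 Hb]].
  destruct (Z.eq_dec c3 0) as [E|E].
  - subst. destruct Hc as [Hc|Hc]; [lia|]. apply Hc. apply eq_IZR. lra.
  - specialize (Hb (Z.to_nat (Z.abs c3))). 
    rewrite INR_IZR_INZ, Z2Nat.id in Hb by lia.
    assert (exists z, IZR (Z.abs c3) * alpha = IZR z) as [z H].
    { destruct (Z_lt_le_dec c3 0).
      - rewrite Z.abs_neq by lia. rewrite opp_IZR. exists c4. lra.
      - rewrite Z.abs_eq by lia. exists (- c4)%Z. rewrite opp_IZR. lra. }
    rewrite H, dnint_int in Hb. assert (0 < Z.abs c3)%Z by lia.
    assert (1 <= Z.to_nat (Z.abs c3))%nat by lia. specialize (Hb H1). lra.
Qed.

Lemma err_comb0 (v w en en' qn : R) :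
  1 <= qn -> 0 <= v -> 0 <= w -> w <= v ->
  Rabs en <= / qn -> Rabs en' <= / qn ->
  Rabs (v * en + w * en') <= 2 * v / qn.
Proof.
  intros Hq Hv Hw Hwv H1 H2.
  eapply Rle_trans. apply Rabs_triang. rewrite !Rabs_mult, !Rabs_right by lra.
  assert (v * Rabs en <= v * / qn) by (apply Rmult_le_compat_l; lra).
  assert (w * Rabs en' <= v * / qn).
  { apply Rle_trans with (w * / qn). apply Rmult_le_compat_l; lra.
    apply Rmult_le_compat_r; [|lra]. left; apply Rinv_0_lt_compat; lra. }
  rewrite (Rabs_right w) by lra. replace (2 * v / qn) with (v * / qn + v * / qn) by (unfold Rdiv; ring). lra.
Qed.

Lemma err_comb (V v w en en' qn : R) :
  1 <= qn -> 0 <= v <= V -> 0 <= w <= V ->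
  Rabs en <= / qn -> Rabs en' <= / qn ->
  Rabs (v * en + w * en') <= 2 * V / qn.
Proof.
  intros Hq Hv Hw H1 H2.
  eapply Rle_trans. apply Rabs_triang. rewrite !Rabs_mult, (Rabs_right v), (Rabs_right w) by lra.
  assert (v * Rabs en <= V * / qn).
  { apply Rle_trans with (v * / qn). apply Rmult_le_compat_l; lra.
    apply Rmult_le_compat_r; [|lra]. left; apply Rinv_0_lt_compat; lra. }
  assert (w * Rabs en' <= V * / qn).
  { apply Rle_trans with (w * / qn). apply Rmult_le_compat_l; lra.
    apply Rmult_le_compat_r; [|lra]. left; apply Rinv_0_lt_compat; lra. }
  replace (2 * V / qn) with (V * / qn + V * / qn) by (unfold Rdiv; ring). lra.
Qed.

Lemma real_core (al be c1 c2 c3 c4 qn qn' pn pn' v1 v2 v3 v4 : R) :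
  Rabs (qn * al - pn) <= / qn -> Rabs (qn' * al - pn') <= / qn ->
  1 <= qn -> 0 <= qn' <= qn -> 0 <= pn <= qn -> 0 <= pn' <= qn ->
  1 <= v1 -> 0 <= v2 <= v1 -> 0 <= v3 <= v1 -> 0 <= v4 <= v1 ->
  qn * v3 + qn' * v4 = pn * v1 + pn' * v2 ->
  be * (c3 * al + c4) = c1 * al + c2 ->
  let Q := qn * v1 + qn' * v2 in let P1 := pn * v1 + pn' * v2 in
  let P2 := pn * v3 + pn' * v4 in
  let N := c4 * Q + c3 * P1 in let K1 := c4 * P1 + c3 * P2 in
  let K2 := c1 * P1 + c2 * Q in let B := 2 * v1 / qn in
  Rabs N >= qn * v1 * Rabs (c3 * al + c4) - Rabs c3 * B /\
  Rabs N <= (Rabs c3 + Rabs c4) * (2 * qn * v1) /\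
  Rabs (N * al - K1) <= (Rabs c3 + Rabs c4) * B /\
  Rabs (N * be - K2) <= (Rabs c1 + Rabs c3 * Rabs be) * B.
Proof.
  intros He He' Hq Hq' Hp Hp' Hv1 Hv2 Hv3 Hv4 Hsym Hrel Q P1 P2 N K1 K2 B.
  assert (E1 : Rabs (Q * al - P1) <= B).
  { replace (Q * al - P1) with (v1 * (qn * al - pn) + v2 * (qn' * al - pn')) by (unfold Q, P1; ring).
    apply err_comb; lra. }
  assert (E2 : Rabs (P1 * al - P2) <= B).
  { replace (P1 * al - P2) with (v3 * (qn * al - pn) + v4 * (qn' * al - pn'))
      by (unfold P1, P2; rewrite <- Hsym; ring).
    apply err_comb; lra. }
  assert (HQ1 : qn * v1 <= Q) by (unfold Q; nra).
  assert (HQ2 : Q <= 2 * qn * v1) by (unfold Q; nra).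
  assert (HP1 : 0 <= P1 <= 2 * qn * v1) by (unfold P1; nra).
  assert (HB : 0 <= B) by (unfold B; apply Rle_mult_inv_pos; lra).
  split; [|split; [|split]].
  - replace N with (Q * (c3 * al + c4) - c3 * (Q * al - P1)) by (unfold N; ring).
    pose proof (Rabs_triang_inv (Q * (c3 * al + c4)) (c3 * (Q * al - P1))).
    rewrite Rabs_mult in H. rewrite (Rabs_right Q) in H by nra.
    rewrite Rabs_mult in H.
    assert (Rabs c3 * Rabs (Q * al - P1) <= Rabs c3 * B) by (apply Rmult_le_compat_l; [apply Rabs_pos|lra]).
    assert (qn * v1 * Rabs (c3 * al + c4) <= Q * Rabs (c3 * al + c4))
      by (apply Rmult_le_compat_r; [apply Rabs_pos|lra]).
    lra.
  - unfold N. eapply Rle_trans. apply Rabs_triang. rewrite !Rabs_mult.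
    rewrite (Rabs_right Q) by nra. rewrite (Rabs_right P1) by lra.
    pose proof (Rabs_pos c3). pose proof (Rabs_pos c4).
    assert (Rabs c4 * Q <= Rabs c4 * (2 * qn * v1)) by (apply Rmult_le_compat_l; lra).
    assert (Rabs c3 * P1 <= Rabs c3 * (2 * qn * v1)) by (apply Rmult_le_compat_l; lra).
    lra.
  - replace (N * al - K1) with (c4 * (Q * al - P1) + c3 * (P1 * al - P2)) by (unfold N, K1; ring).
    eapply Rle_trans. apply Rabs_triang. rewrite !Rabs_mult.
    pose proof (Rabs_pos c3). pose proof (Rabs_pos c4).
    assert (Rabs c4 * Rabs (Q * al - P1) <= Rabs c4 * B) by (apply Rmult_le_compat_l; lra).
    assert (Rabs c3 * Rabs (P1 * al - P2) <= Rabs c3 * B) by (apply Rmult_le_compat_l; lra).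
    lra.
  - replace (N * be - K2) with ((c1 - c3 * be) * (Q * al - P1) + Q * (be * (c3 * al + c4) - (c1 * al + c2)))
      by (unfold N, K2; ring).
    rewrite Hrel. replace (c1 * al + c2 - (c1 * al + c2)) with 0 by ring. rewrite Rmult_0_r, Rplus_0_r.
    rewrite Rabs_mult. apply Rmult_le_compat; try apply Rabs_pos; try lra.
    unfold Rminus. eapply Rle_trans. apply Rabs_triang. rewrite Rabs_Ropp, Rabs_mult. lra.
Qed.

Lemma Mseq_bounds a (Ha : forall i, (1 <= a i)%nat) r :
  (qm a r <= cf_q a r /\ pm a r <= cf_q a r /\ cf_p a r <= cf_q a r)%nat.
Proof.
  pose proof (p_le_q a Ha r) as [H1 _].
  destruct r as [|r]; cbn [qm pm].
  - rewrite cf_q_0 in *. lia.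
  - pose proof (q_basic a Ha r). pose proof (p_le_q a Ha r). lia.
Qed.

Lemma IZR_nat x : IZR (Z.of_nat x) = INR x.
Proof. symmetry; apply INR_IZR_INZ. Qed.

Lemma key_k a alpha (Hcf : is_cf alpha a) V U c1 c2 c3 c4 beta :
  begins_with a (V ++ U ++ rev U) -> (1 <= length U)%nat ->
  beta * (IZR c3 * alpha + IZR c4) = IZR c1 * alpha + IZR c2 ->
  let qn := Qr a (length (V ++ U ++ rev U)) in let v1 := Qr a (length V) in
  let B := 2 * v1 / qn in
  exists N K1 K2 : Z,
  Rabs (IZR N) >= qn * v1 * Rabs (IZR c3 * alpha + IZR c4) - Rabs (IZR c3) * B /\
  Rabs (IZR N) <= (Rabs (IZR c3) + Rabs (IZR c4)) * (2 * qn * v1) /\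
  Rabs (IZR N * alpha - IZR K1) <= (Rabs (IZR c3) + Rabs (IZR c4)) * B /\
  Rabs (IZR N * beta - IZR K2) <= (Rabs (IZR c1) + Rabs (IZR c3) * Rabs beta) * B.
Proof.
  intros Hb HU Hrel qn v1 B.
  assert (Ha := proj1 Hcf).
  pose proof (sym_key a V U Hb) as Hsym. simpl in Hsym.
  revert Hsym qn v1 B.
  set (n := length (V ++ U ++ rev U)). set (r := length V).
  assert (Hn : exists n', n = S n').
  { exists (pred n). unfold n. rewrite !length_app. lia. }
  destruct Hn as [n' Hn]. rewrite Hn. intros Hsym qn v1 B.
  unfold Mseq in Hsym; simpl in Hsym.
  destruct (Mseq_bounds a Ha r) as [Hb1 [Hb2 Hb3]].
  apply le_INR in Hb1, Hb2, Hb3.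
  assert (Hq1 := Qr_ge1 a Ha (S n')).
  assert (Hqr := Qr_ge1 a Ha r).
  assert (Hmono := Qr_mono a Ha n' (S n') (Nat.le_succ_diag_r _)).
  assert (He : Rabs (Qr a (S n') * alpha - Pr a (S n')) <= / Qr a (S n')).
  { eapply Rle_trans. apply cf_err; auto. apply Rinv_le_contravar. lra.
    apply Qr_mono; auto. }
  assert (He' := cf_err a alpha Hcf n').
  pose proof (Pr_le_Qr a Ha n'). pose proof (Pr_le_Qr a Ha (S n')).
  pose proof (Pr_ge0 a n'). pose proof (Pr_ge0 a (S n')).
  pose proof (pos_INR (qm a r)). pose proof (pos_INR (pm a r)). pose proof (pos_INR (cf_p a r)).
  pose proof (Qr_ge1 a Ha n').
  assert (Hc := real_core alpha beta (IZR c1) (IZR c2) (IZR c3) (IZR c4)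
     (Qr a (S n')) (Qr a n') (Pr a (S n')) (Pr a n')
     (INR (cf_q a r)) (INR (qm a r)) (INR (cf_p a r)) (INR (pm a r))
     He He' Hq1 ltac:(lra) ltac:(lra) ltac:(lra) Hqr ltac:(unfold Qr in *; lra)
     ltac:(unfold Qr in *; lra) ltac:(unfold Qr in *; lra) Hsym Hrel).
  simpl in Hc.
  set (Qz := Z.of_nat (cf_q a (S n') * cf_q a r + cf_q a n' * qm a r)).
  set (P1z := Z.of_nat (cf_p a (S n') * cf_q a r + cf_p a n' * qm a r)).
  set (P2z := Z.of_nat (cf_p a (S n') * cf_p a r + cf_p a n' * pm a r)).
  assert (EQ : IZR Qz = Qr a (S n') * INR (cf_q a r) + Qr a n' * INR (qm a r))
    by (unfold Qz, Qr; rewrite IZR_nat, plus_INR, !mult_INR; ring).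
  assert (EP1 : IZR P1z = Pr a (S n') * INR (cf_q a r) + Pr a n' * INR (qm a r))
    by (unfold P1z, Pr; rewrite IZR_nat, plus_INR, !mult_INR; ring).
  assert (EP2 : IZR P2z = Pr a (S n') * INR (cf_p a r) + Pr a n' * INR (pm a r))
    by (unfold P2z, Pr; rewrite IZR_nat, plus_INR, !mult_INR; ring).
  exists (c4 * Qz + c3 * P1z)%Z, (c4 * P1z + c3 * P2z)%Z, (c1 * P1z + c2 * Qz)%Z.
  rewrite !plus_IZR, !mult_IZR, EQ, EP1, EP2.
  unfold qn, v1, B. exact Hc.
Qed.

Lemma ln_le' x y : 0 < x -> x <= y -> ln x <= ln y.
Proof. intros H [H1|H1]. left; apply ln_increasing; auto. subst; lra. Qed.

Lemma qroot_eq a j : qroot a j = exp (ln (Qr a (S j)) / INR (S j)).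
Proof. unfold qroot, Rpower, Qr. f_equal. unfold Rdiv. ring. Qed.

Lemma Qr_pos a (Ha : forall i, (1 <= a i)%nat) n : 0 < Qr a n.
Proof. pose proof (Qr_ge1 a Ha n). lra. Qed.

Lemma q_cube a (Ha : forall i, (1 <= a i)%nat) j :
  2 ^ (j + 2) <= Qr a (j + 2) ^ 3 /\ 2 ^ (j + 3) <= Qr a (j + 3) ^ 3.
Proof.
  assert (Hd : forall n, 2 * Qr a n <= Qr a (S (S n))).
  { intro n. unfold Qr. rewrite <- (INR_IZR_INZ 2) || idtac.
    replace 2 with (INR 2) by (simpl; lra). rewrite <- mult_INR. apply le_INR.
    apply q_double; auto. }
  induction j as [|j IH].
  - simpl. pose proof (Hd 0%nat). pose proof (Hd 1%nat).
    pose proof (Qr_ge1 a Ha 0). pose proof (Qr_ge1 a Ha 1).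
    pose proof (Qr_mono a Ha 1 2 ltac:(lia)).
    assert (2 <= Qr a 3) by lra. assert (2 <= Qr a 2) by lra.
    assert (2 ^ 3 <= Qr a 2 ^ 3) by (apply pow_incr; lra).
    assert (2 ^ 3 <= Qr a 3 ^ 3) by (apply pow_incr; lra).
    simpl in *. split; lra.
  - destruct IH as [IH1 IH2]. split.
    + replace (S j + 2)%nat with (j + 3)%nat by lia. exact IH2.
    + replace (S j + 3)%nat with (S (S (j + 2))) by lia.
      pose proof (Hd (j + 2)%nat). pose proof (Qr_ge1 a Ha (j + 2)).
      assert ((2 * Qr a (j + 2)) ^ 3 <= Qr a (S (S (j + 2))) ^ 3).
      { apply pow_incr. lra. }
      replace (S (S (j + 2))) with (j + 2 + 2)%nat by lia. rewrite pow_add.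
      replace (j + 2 + 2)%nat with (S (S (j + 2))) by lia.
      simpl in H1 |- *. nra.
Qed.

Lemma qroot_lb a (Ha : forall i, (1 <= a i)%nat) j : (1 <= j)%nat ->
  exp (ln 2 / 3) <= qroot a j.
Proof.
  intro Hj. rewrite qroot_eq.
  destruct (Rle_lt_dec (ln 2 / 3) (ln (Qr a (S j)) / INR (S j))) as [H|H].
  - destruct H as [H|H]. left; apply exp_increasing; auto. rewrite H; lra.
  - exfalso.
    destruct (q_cube a Ha (j - 1)) as [H1 _].
    replace (j - 1 + 2)%nat with (S j) in H1 by lia.
    apply ln_le' in H1; [|apply pow_lt; lra].
    rewrite !ln_pow in H1 by (try lra; apply Qr_pos; auto).
    pose proof (lt_0_INR (S j) ltac:(lia)).
    apply (Rmult_lt_compat_r (INR (S j) * 3)) in H; [|nra].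
    replace (ln 2 / 3 * (INR (S j) * 3)) with (INR (S j) * ln 2) in H by (field).
    replace (ln (Qr a (S j)) / INR (S j) * (INR (S j) * 3)) with (3 * ln (Qr a (S j))) in H
      by (field; lra).
    replace (INR 3) with 3 in H1 by (simpl; ring).
    lra.
Qed.

Lemma nat_unbounded (T : R) : exists k : nat, T < INR k.
Proof.
  destruct (archimed T) as [H1 H2].
  destruct (Z_lt_le_dec (up T) 0).
  - exists 0%nat. assert (IZR (up T) < 0) by (apply IZR_lt; lia). simpl. lra.
  - exists (Z.to_nat (up T)). rewrite INR_IZR_INZ, Z2Nat.id by lia. lra.
Qed.

Lemma asym (alpha : R) (a : nat -> nat) (Ha : forall i, (1 <= a i)%nat)
  (x : R) (Hx0 : 0 < x) (U V : nat -> list nat)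
  (Hgrow : forall k, (List.length (U k) < length (U (S k)))%nat)
  (Hlen : forall k, INR (List.length (U k)) >= x * INR (List.length (V k)))
  (M m : R)
  (HM : is_LimSup_seq (qroot a) (Finite M))
  (Hm : is_LimInf_seq (qroot a) (Finite m))
  (Hx : x > 3 / 2 * (ln M / ln m) - 1 / 2) :
  forall eta, 0 < eta -> exists k, (1 <= length (U k))%nat /\
    Qr a (length (V k)) ^ 3 / Qr a (length (V k ++ U k ++ rev (U k))) < eta.
Proof.
  intros eta Heta.
  assert (Hs : forall k, (k <= length (U k))%nat).
  { induction k. lia. specialize (Hgrow k). lia. }
  set (c0 := exp (ln 2 / 3)).
  assert (Hc0 : 1 < c0).
  { unfold c0. rewrite <- exp_0. apply exp_increasing. pose proof ln_lt_2. lra. }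
  assert (Hm1 : c0 <= m).
  { destruct (Rle_lt_dec c0 m) as [H|H]; auto. exfalso.
    destruct (Hm (mkposreal (c0 - m) ltac:(lra))) as [Hm1 _].
    destruct (Hm1 1%nat) as [j [Hj Hu]]. simpl in Hu.
    pose proof (qroot_lb a Ha j Hj). fold c0 in H0. lra. }
  assert (HMm : m <= M).
  { destruct (Rle_lt_dec m M) as [H|H]; auto. exfalso.
    destruct (Hm (mkposreal ((m - M)/2) ltac:(lra))) as [_ [N1 HN1]].
    destruct (HM (mkposreal ((m - M)/2) ltac:(lra))) as [_ [N0 HN0]].
    specialize (HN1 (max N0 N1) ltac:(lia)). specialize (HN0 (max N0 N1) ltac:(lia)).
    simpl in *. lra. }
  set (L := ln M). set (l := ln m).
  assert (Hl : 0 < l).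
  { unfold l. rewrite <- ln_1. apply ln_increasing; lra. }
  assert (HLl : l <= L) by (apply ln_le'; lra).
  set (G := (1 + 2 * x) * l - 3 * L).
  assert (HG : 0 < G).
  { unfold G. assert (L / l * l = L) by (field; lra).
    assert (2 * l * x > 2 * l * (3 / 2 * (L / l) - 1 / 2)). { apply Rmult_gt_compat_l. lra. unfold L, l; exact Hx. }
    nra. }
  set (d := Rmin (l / 2) (G / (2 * (4 + 2 * x)))).
  assert (Hd0 : 0 < d).
  { unfold d, Rmin. destruct Rle_dec. lra. apply Rdiv_lt_0_compat; lra. }
  assert (Hd1 : d <= l / 2) by apply Rmin_l.
  assert (Hd2 : d * (4 + 2 * x) <= G / 2).
  { assert (d <= G / (2 * (4 + 2 * x))) by apply Rmin_r.
    apply (Rmult_le_compat_r (4 + 2 * x)) in H; [|lra].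
    replace (G / (2 * (4 + 2 * x)) * (4 + 2 * x)) with (G / 2) in H by (field; lra). lra. }
  set (gam := (1 + 2 * x) * (l - d) - 3 * (L + d)).
  assert (Hgam : G / 2 <= gam) by (unfold gam, G in *; nra).
  assert (HMpos : 0 < M) by lra.
  destruct (HM (mkposreal (M * (exp d - 1)) ltac:(
     apply Rmult_lt_0_compat; [lra|]; pose proof (exp_increasing 0 d Hd0); rewrite exp_0 in *; lra)))
    as [_ [N0 HN0]].
  simpl in HN0.
  assert (Hup : forall j, (N0 <= j)%nat -> ln (Qr a (S j)) < INR (S j) * (L + d)).
  { intros j Hj. specialize (HN0 j Hj). rewrite qroot_eq in HN0.
    replace (M + M * (exp d - 1)) with (exp (L + d)) in HN0
      by (unfold L; rewrite exp_plus, exp_ln by lra; ring).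
    apply exp_lt_inv in HN0.
    pose proof (lt_0_INR (S j) ltac:(lia)).
    apply (Rmult_lt_compat_l (INR (S j))) in HN0; auto.
    replace (INR (S j) * (ln (Qr a (S j)) / INR (S j))) with (ln (Qr a (S j))) in HN0 by (field; lra).
    exact HN0. }
  set (C := ln (Qr a (S N0))).
  assert (HC : forall i, ln (Qr a i) <= C + INR i * (L + d)).
  { intro i. assert (0 <= INR i * (L + d)) by (apply Rmult_le_pos; [apply pos_INR|lra]).
    destruct (le_lt_dec i (S N0)).
    - assert (ln (Qr a i) <= C) by (apply ln_le'; [apply Qr_pos; auto| apply Qr_mono; auto]). lra.
    - destruct i as [|j]; [lia|]. specialize (Hup j ltac:(lia)).
      assert (0 <= C) by (unfold C; rewrite <- ln_1; apply ln_le'; [lra|apply Qr_ge1; auto]). lra. }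
  destruct (Hm (mkposreal (m * (1 - exp (- d))) ltac:(
     apply Rmult_lt_0_compat; [lra|]; pose proof (exp_increasing (-d) 0 ltac:(lra)); rewrite exp_0 in *; lra)))
    as [_ [N1 HN1]].
  simpl in HN1.
  assert (Hlow : forall j, (N1 <= j)%nat -> INR (S j) * (l - d) < ln (Qr a (S j))).
  { intros j Hj. specialize (HN1 j Hj). rewrite qroot_eq in HN1.
    replace (m - m * (1 - exp (- d))) with (exp (l + - d)) in HN1
      by (unfold l; rewrite exp_plus, exp_ln by lra; ring).
    apply exp_lt_inv in HN1.
    pose proof (lt_0_INR (S j) ltac:(lia)).
    apply (Rmult_lt_compat_l (INR (S j))) in HN1; auto.
    replace (INR (S j) * (ln (Qr a (S j)) / INR (S j))) with (ln (Qr a (S j))) in HN1 by (field; lra).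
    lra. }
  destruct (nat_unbounded ((3 * C - ln eta) * x / gam)) as [k0 Hk0].
  set (k := max k0 (S N1)).
  exists k. split; [specialize (Hs k); lia|].
  set (r := length (V k)). set (s := length (U k)).
  assert (Hn : length (V k ++ U k ++ rev (U k)) = (r + 2 * s)%nat)
    by (unfold r, s; rewrite !length_app, length_rev; lia).
  rewrite Hn.
  assert (Hsk : (k <= s)%nat) by apply Hs.
  assert (Hnn : exists j, (r + 2 * s)%nat = S j /\ (N1 <= j)%nat).
  { exists (pred (r + 2 * s)). unfold k in Hsk. lia. }
  destruct Hnn as [j [Hj1 Hj2]].
  pose proof (Hlow j Hj2) as Hlo. rewrite <- Hj1 in Hlo.
  pose proof (HC r) as Hhi.
  assert (Hrx : x * INR r <= INR s) by (specialize (Hlen k); fold r s in Hlen; lra).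
  assert (HA : 0 <= 3 * (L + d) - (l - d)) by lra.
  assert (Hr : INR r * (3 * (L + d) - (l - d)) <= INR s / x * (3 * (L + d) - (l - d))).
  { apply Rmult_le_compat_r; auto. apply (Rmult_le_reg_l x); auto.
    replace (x * (INR s / x)) with (INR s) by (field; lra). lra. }
  assert (Hsk' : INR k <= INR s) by (apply le_INR; auto).
  assert (Hk0' : INR k0 <= INR k) by (apply le_INR; unfold k; lia).
  assert (Hbig : 3 * C - ln eta < INR s / x * gam).
  { assert ((3 * C - ln eta) * x / gam < INR s) by lra.
    apply (Rmult_lt_compat_r (gam / x)) in H; [|apply Rdiv_lt_0_compat; lra].
    replace ((3 * C - ln eta) * x / gam * (gam / x)) with (3 * C - ln eta) in H by (field; lra).
    replace (INR s * (gam / x)) with (INR s / x * gam) in H by (field; lra). exact H. }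
  assert (Hfin : 3 * ln (Qr a r) - ln (Qr a (r + 2 * s)) < ln eta).
  { rewrite plus_INR, mult_INR in Hlo. simpl (INR 2) in Hlo.
    assert (INR s / x * gam = 2 * INR s * (l - d) - INR s / x * (3 * (L + d) - (l - d))).
    { unfold gam. field. lra. }
    nra. }
  apply ln_lt_inv; auto.
  - apply Rdiv_lt_0_compat. apply pow_lt, Qr_pos; auto. apply Qr_pos; auto.
  - unfold Rdiv. rewrite ln_mult, ln_Rinv, ln_pow; try (apply Qr_pos; auto).
    simpl (INR 3). replace (1 + 1 + 1) with 3 by ring. lra.
    apply pow_lt, Qr_pos; auto. apply Rinv_0_lt_compat, Qr_pos; auto.
Qed.

Theorem theorem5 (alpha : R) (a : nat -> nat)
  (Hcf : is_cf alpha a) (Hbad : Bad alpha)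
  (x : R) (Hxrat : exists r s : nat, (0 < r)%nat /\ (0 < s)%nat /\ x = INR r / INR s)
  (U V : nat -> list nat)
  (HUpos : forall k, pos_word (U k)) (HVpos : forall k, pos_word (V k))
  (Hpref : forall k, begins_with a (V k ++ U k ++ List.rev (U k)))
  (Hgrow : forall k, (List.length (U k) < length (U (S k)))%nat)
  (Hlen : forall k, INR (List.length (U k)) >= x * INR (List.length (V k)))
  (M m : R)
  (HM : is_LimSup_seq (qroot a) (Finite M))
  (Hm : is_LimInf_seq (qroot a) (Finite m))
  (Hx : x > 3 / 2 * (ln M / ln m) - 1 / 2) :
  forall beta : R,
    (exists c1 c2 c3 c4 : Z, (c1 * c4 - c2 * c3 <> 0)%Z /\
       beta = (IZR c1 * alpha + IZR c2) / (IZR c3 * alpha + IZR c4)) ->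
    is_glb_Rbar
      (fun y : R => exists q : nat, (1 <= q)%nat /\
         y = INR q * dnint (INR q * alpha) * dnint (INR q * beta))
      (Finite 0).
Proof.
  intros beta [c1 [c2 [c3 [c4 [Hdet Hbeta]]]]].
  assert (Ha := proj1 Hcf).
  assert (Hx0 : 0 < x).
  { destruct Hxrat as [r [s [Hr [Hs ->]]]]. apply Rdiv_lt_0_compat; apply lt_0_INR; auto. }
  assert (Hden : IZR c3 * alpha + IZR c4 <> 0).
  { apply bad_irr; auto. destruct (Z.eq_dec c3 0); [|left; auto].
    right. intro. subst. apply Hdet. ring. }
  assert (Hrel : beta * (IZR c3 * alpha + IZR c4) = IZR c1 * alpha + IZR c2)
    by (rewrite Hbeta; field; auto).
  set (E := fun y : R => exists q : nat, (1 <= q)%nat /\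
         y = INR q * dnint (INR q * alpha) * dnint (INR q * beta)).
  assert (Hnn : forall y, E y -> 0 <= y).
  { intros y [q [_ ->]]. apply Rmult_le_pos; [apply Rmult_le_pos|]; 
    try apply dnint_ge0; apply pos_INR. }
  assert (Hsmall : forall eps, 0 < eps -> exists y, E y /\ y < eps).
  { intros eps Heps.
    set (d0 := Rabs (IZR c3 * alpha + IZR c4)).
    assert (Hd0 : 0 < d0) by (apply Rabs_pos_lt; auto).
    set (S34 := Rabs (IZR c3) + Rabs (IZR c4)).
    set (S1b := Rabs (IZR c1) + Rabs (IZR c3) * Rabs beta).
    assert (HS34 : 0 <= S34) by (unfold S34; pose proof (Rabs_pos (IZR c3)); pose proof (Rabs_pos (IZR c4)); lra).
    assert (HS1b : 0 <= S1b) by (unfold S1b; pose proof (Rabs_pos (IZR c3)); pose proof (Rabs_pos (IZR c1)); pose proof (Rabs_pos beta); nra).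
    set (Kc := 8 * (S34 * S34) * S1b).
    assert (HKc : 0 <= Kc) by (unfold Kc; apply Rmult_le_pos; [|auto]; nra).
    pose proof (Rabs_pos (IZR c3)) as Hc3.
    set (eta := Rmin (eps / (Kc + 1)) (d0 / (2 * Rabs (IZR c3) + 1))).
    assert (Heta : 0 < eta).
    { unfold eta, Rmin. destruct Rle_dec; apply Rdiv_lt_0_compat; lra. }
    destruct (asym alpha a Ha x Hx0 U V Hgrow Hlen M m HM Hm Hx eta Heta) as [k [Hk1 Hk]].
    pose proof (key_k a alpha Hcf (V k) (U k) c1 c2 c3 c4 beta (Hpref k) Hk1 Hrel) as Hkey.
    cbv zeta in Hkey.
    destruct Hkey as [N [K1 [K2 [B1 [B2 [B3 B4]]]]]].
    fold d0 S34 S1b in B1, B2, B3, B4.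
    set (qn := Qr a (length (V k ++ U k ++ rev (U k)))) in *.
    set (v1 := Qr a (length (V k))) in *.
    assert (Hqn : 1 <= qn) by apply Qr_ge1, Ha.
    assert (Hv1 : 1 <= v1) by apply Qr_ge1, Ha.
    assert (Heta1 : eta <= eps / (Kc + 1)) by apply Rmin_l.
    assert (Heta2 : eta <= d0 / (2 * Rabs (IZR c3) + 1)) by apply Rmin_r.
    assert (Hv3 : 1 <= v1 ^ 3) by (apply pow_R1_Rle; lra).
    assert (Hinvq : / qn <= v1 ^ 3 / qn).
    { unfold Rdiv. rewrite <- (Rmult_1_l (/ qn)) at 1. apply Rmult_le_compat_r; auto.
      left; apply Rinv_0_lt_compat; lra. }
    assert (Hqd : 2 * Rabs (IZR c3) + 1 < qn * d0).
    { assert (/ qn < d0 / (2 * Rabs (IZR c3) + 1)) by lra.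
      apply (Rmult_lt_compat_r (qn * (2 * Rabs (IZR c3) + 1))) in H; [|nra].
      replace (/ qn * (qn * (2 * Rabs (IZR c3) + 1))) with (2 * Rabs (IZR c3) + 1) in H by (field; lra).
      replace (d0 / (2 * Rabs (IZR c3) + 1) * (qn * (2 * Rabs (IZR c3) + 1))) with (qn * d0) in H
        by (field; lra). exact H. }
    assert (HNpos : 0 < Rabs (IZR N)).
    { assert (Rabs (IZR c3) * (2 * v1 / qn) <= Rabs (IZR c3) * (2 * v1)).
      { apply Rmult_le_compat_l; auto. unfold Rdiv.
        rewrite <- (Rmult_1_r (2 * v1)) at 2. apply Rmult_le_compat_l; [lra|].
        rewrite <- Rinv_1. apply Rinv_le_contravar; lra. }
      assert (qn * v1 * d0 - Rabs (IZR c3) * (2 * v1) > 0).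
      { replace (qn * v1 * d0 - Rabs (IZR c3) * (2 * v1)) with (v1 * (qn * d0 - 2 * Rabs (IZR c3))) by ring.
        apply Rmult_gt_0_compat; lra. }
      lra. }
    assert (HN0 : (N <> 0)%Z) by (intro; subst; rewrite Rabs_R0 in HNpos; lra).
    set (q := Z.to_nat (Z.abs N)).
    assert (Hq : INR q = Rabs (IZR N)) by (unfold q; rewrite INR_IZR_INZ, Z2Nat.id, abs_IZR by lia; reflexivity).
    exists (INR q * dnint (INR q * alpha) * dnint (INR q * beta)). split.
    - exists q. split; auto. unfold q. lia.
    - assert (D1 : dnint (INR q * alpha) <= S34 * (2 * v1 / qn)).
      { eapply Rle_trans; [|exact B3]. rewrite Hq, <- abs_IZR. apply dnint_abs. }
      assert (D2 : dnint (INR q * beta) <= S1b * (2 * v1 / qn)).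
      { eapply Rle_trans; [|exact B4]. rewrite Hq, <- abs_IZR. apply dnint_abs. }
      assert (Hbound : INR q * dnint (INR q * alpha) * dnint (INR q * beta)
                       <= (S34 * (2 * qn * v1)) * (S34 * (2 * v1 / qn)) * (S1b * (2 * v1 / qn))).
      { apply Rmult_le_compat; [|apply dnint_ge0| |exact D2].
        apply Rmult_le_pos; [apply pos_INR|apply dnint_ge0].
        apply Rmult_le_compat; [apply pos_INR|apply dnint_ge0| |exact D1]. rewrite Hq. exact B2. }
      replace ((S34 * (2 * qn * v1)) * (S34 * (2 * v1 / qn)) * (S1b * (2 * v1 / qn)))
        with (Kc * (v1 ^ 3 / qn)) in Hbound by (unfold Kc; field; lra).
      assert (Kc * (v1 ^ 3 / qn) <= Kc * eta) by (apply Rmult_le_compat_l; lra).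
      assert (Kc * eta <= Kc * (eps / (Kc + 1))) by (apply Rmult_le_compat_l; lra).
      assert (Kc * (eps / (Kc + 1)) < eps).
      { apply (Rmult_lt_reg_r (Kc + 1)); [lra|].
        replace (Kc * (eps / (Kc + 1)) * (Kc + 1)) with (Kc * eps) by (field; lra). nra. }
      lra. }
  split.
  - intros y Hy. simpl. apply Hnn. exact Hy.
  - intros b Hb. destruct b as [b| |]; simpl; auto.
    + destruct (Rle_lt_dec b 0) as [H|H]; auto.
      destruct (Hsmall b H) as [y [Hy Hyb]]. specialize (Hb y Hy). simpl in Hb. lra.
    + destruct (Hsmall 1 ltac:(lra)) as [y [Hy _]]. specialize (Hb y Hy). simpl in Hb. exact Hb.
Qed.
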